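(* For every $x\in\mathbb T^3\setminus\mathfrak I$, the Lebesgue measure of $\mathcal S(x)$ is strictly positive.
   Context: $\mathbb{T}^3=\mathbb{R}^3/\mathbb{Z}^3$; $\omega(k)=\omega_0+\sum_{j=1}^3 2(1-\cos(2\pi k^j))$ with fixed $2<\omega_0<3$. Two wave vectors $x,y\in\mathbb{T}^3$ are connected by one collision if $\omega(y)=\omega(x)+\omega(y-x)$, or $\omega(x)=\omega(y)+\omega(x-y)$, or $\omega(x+y)=\omega(x)+\omega(y)$. The no-collision region $\mathfrak I$ is the set of $x\in\mathbb T^3$ such that no $y\in\mathbb T^3$ is connected to $x$ by one collision. For $x\in\mathbb T^3\setminus\mathfrak I$: $\mathcal S^1(x)$ is the set of $y$ connected to $x$ by one collision, $\mathcal S^n(x)=\bigcup_{z\in\mathcal S^{n-1}(x)}\mathcal S^1(z)$ for $n\ge2$, and $\mathcal S(x)=\bigcup_{n\ge1}\mathcal S^n(x)$. *)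

(* Defs.v *)
From HB Require Import structures.
From mathcomp Require Import all_boot all_order all_algebra.
From mathcomp Require Import all_classical all_reals all_analysis.
Set Implicit Arguments. Unset Strict Implicit. Unset Printing Implicit Defensive.
Import Order.TTheory GRing.Theory Num.Theory.
Import numFieldNormedType.Exports.
Local Open Scope classical_set_scope.
Local Open Scope ring_scope.

(* The torus T^3 = R^3/Z^3 is represented by R^3 = (R * R) * R; all the
   notions below are Z^3-periodic, so they descend to the torus, and the
   Lebesgue measure of a subset of T^3 is the Lebesgue measure of its
   periodic lift restricted to the fundamental domain [0,1)^3. *)
Section Defs.
Variable R : realType.
Definition pt := ((R * R) * R)%type.

Definition padd (x y : pt) : pt :=
  ((x.1.1 + y.1.1, x.1.2 + y.1.2), x.2 + y.2).
Definition psub (x y : pt) : pt :=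
  ((x.1.1 - y.1.1, x.1.2 - y.1.2), x.2 - y.2).

Definition omega (w0 : R) (k : pt) : R :=
  w0 + (2 * (1 - cos (2 * pi * k.1.1))
        + 2 * (1 - cos (2 * pi * k.1.2))
        + 2 * (1 - cos (2 * pi * k.2))).

Definition connected1 (w0 : R) (x y : pt) : Prop :=
  omega w0 y = omega w0 x + omega w0 (psub y x)
  \/ omega w0 x = omega w0 y + omega w0 (psub x y)
  \/ omega w0 (padd x y) = omega w0 x + omega w0 y.

Definition no_collision (w0 : R) : set pt :=
  [set x | forall y : pt, ~ connected1 w0 x y].

Definition S1 (w0 : R) (x : pt) : set pt := [set y | connected1 w0 x y].

(* Sn w0 n x = S^{n+1}(x) *)
Fixpoint Sn (w0 : R) (n : nat) (x : pt) : set pt :=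
  match n with
  | O => S1 w0 x
  | n'.+1 => \bigcup_(z in Sn w0 n' x) S1 w0 z
  end.

Definition Sall (w0 : R) (x : pt) : set pt := \bigcup_n Sn w0 n x.

Definition cube : set pt :=
  [set k | (0 <= k.1.1 < 1) /\ (0 <= k.1.2 < 1) /\ (0 <= k.2 < 1)].

Definition leb3 : set pt -> \bar R :=
  ((lebesgue_measure \x lebesgue_measure) \x lebesgue_measure)%E.
End Defs.

(* Main.v *)
Require Import Defs.
From HB Require Import structures.
From mathcomp Require Import all_boot all_order all_algebra.
From mathcomp Require Import all_classical all_reals all_analysis.
From mathcomp Require Import ring lra.
Import Order.TTheory GRing.Theory Num.Theory.
Import numFieldNormedType.Exports.
Set Implicit Arguments. Unset Strict Implicit. Unset Printing Implicit Defensive.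
Local Open Scope classical_set_scope.
Local Open Scope ring_scope.

Section T.
Variable R : realType.
Implicit Types x y a b t : R.

Definition cc (t : R) := 2 * (1 - cos (2 * pi * t)).

Lemma sin_sub x y : sin (x - y) = sin x * cos y - cos x * sin y.
Proof. by rewrite sinD cosN sinN mulrN. Qed.
Lemma cos_sub x y : cos (x - y) = cos x * cos y + sin x * sin y.
Proof. by rewrite cosD cosN sinN mulrN opprK. Qed.

Lemma prod_sin x y : 2 * sin x * sin y = cos (x - y) - cos (x + y).
Proof. rewrite cos_sub cosD; ring. Qed.

Lemma sin2_cos x : 2 * sin x ^+ 2 = 1 - cos (x + x).
Proof. rewrite cosD; have h := cos2Dsin2 x; rewrite !expr2 in h *; lra. Qed.

Lemma cc_sin t : cc t = 4 * sin (pi * t) ^+ 2.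
Proof.
rewrite /cc (_ : 2 * pi * t = pi * t + pi * t); last by ring.
rewrite -sin2_cos; ring.
Qed.

Definition gg a b := cc (a + b) - cc a - cc b.

Lemma gg_sin a b : gg a b = 4 * sin (pi * a) * (sin (pi * (a + 2 * b)) - sin (pi * a)).
Proof.
rewrite /gg /cc.
have E1 : 4 * sin (pi * a) * sin (pi * (a + 2 * b)) = 2 * (cos (2 * pi * b) - cos (2 * pi * (a + b))).
  rewrite (_ : 4 * sin (pi * a) * sin (pi * (a + 2 * b)) = 2 * (2 * sin (pi * a) * sin (pi * (a + 2 * b)))); last by ring.
  rewrite prod_sin (_ : pi * a - pi * (a + 2 * b) = - (2 * pi * b)); last by ring.
  rewrite cosN (_ : pi * a + pi * (a + 2 * b) = 2 * pi * (a + b)) //; ring.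
have E2 : 4 * sin (pi * a) * sin (pi * a) = 2 * (1 - cos (2 * pi * a)).
  rewrite (_ : 2 * pi * a = pi * a + pi * a); last by ring.
  rewrite -sin2_cos; ring.
lra.
Qed.

Lemma gg_le1 a b : gg a b <= 1.
Proof.
rewrite gg_sin.
set s := sin (pi * a); set u := sin (pi * (a + 2 * b)).
have h1 := sin_geN1 (pi * (a + 2 * b)); have h2 := sin_le1 (pi * (a + 2 * b)); rewrite -/u in h1 h2.
have q1 : 0 <= (2 * s - 1) ^+ 2 by exact: sqr_ge0.
have q2 : 0 <= (2 * s + 1) ^+ 2 by exact: sqr_ge0.
have [s0|s0] := leP 0 s; nra.
Qed.


Definition GG (a b : pt R) := gg a.1.1 b.1.1 + gg a.1.2 b.1.2 + gg a.2 b.2.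

Lemma omegaE (w0 : R) (k : pt R) : omega w0 k = w0 + (cc k.1.1 + cc k.1.2 + cc k.2).
Proof. by []. Qed.

Lemma omega_padd (w0 : R) (a b : pt R) :
  (omega w0 (padd a b) = omega w0 a + omega w0 b) <-> GG a b = w0.
Proof.
rewrite !omegaE /GG /gg /padd /=; split => H; lra.
Qed.

Lemma GGC (a b : pt R) : GG a b = GG b a.
Proof. by rewrite /GG /gg !(addrC a.1.1) !(addrC a.1.2) !(addrC a.2); lra. Qed.

Lemma conn_GG (w0 : R) (x y : pt R) : GG x y = w0 -> Defs.connected1 w0 x y.
Proof. by move=> H; right; right; apply/omega_padd. Qed.

Lemma padd_psub (x y : pt R) : padd y (psub x y) = x.
Proof. by case: x => [[? ?] ?]; case: y => [[? ?] ?]; rewrite /padd /psub /=; congr (_, _, _); ring. Qed.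

Lemma psub_psub (x y : pt R) : psub x (psub x y) = y.
Proof. by case: x => [[? ?] ?]; case: y => [[? ?] ?]; rewrite /psub /=; congr (_, _, _); ring. Qed.

Lemma extract (w0 : R) (x y : pt R) : Defs.connected1 w0 x y ->
  exists a b : pt R, GG a b = w0 /\ (a = x \/ Defs.connected1 w0 x a) /\ (b = x \/ Defs.connected1 w0 x b).
Proof.
case=> [H|[H|H]].
- exists x, (psub y x); split.
    by apply/omega_padd; rewrite padd_psub.
  split; first by left.
  right; apply: conn_GG; apply/omega_padd; rewrite padd_psub; exact: H.
- exists y, (psub x y); split.
    by apply/omega_padd; rewrite padd_psub.
  split; first by right; right; left; exact: H.
  right; right; left; rewrite psub_psub H; exact: addrC.
- exists x, y; split; first by apply/omega_padd.
  by split; [left|right; apply: conn_GG; apply/omega_padd].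
Qed.

Definition reach2 (w0 : R) (v z : pt R) := exists y : pt R, GG v y = w0 /\ GG y z = w0.

Lemma reach_Sall (w0 : R) (x v z : pt R) : (v = x \/ Defs.connected1 w0 x v) -> reach2 w0 v z ->
  Sall w0 x z.
Proof.
move=> hv [y [h1 h2]].
have vy : S1 w0 v y by apply: conn_GG.
have yz : S1 w0 y z by apply: conn_GG.
case: hv => [<-|xv].
- exists 1%N => //=; exists y => //.
- exists 2%N => //=; exists y => //; exists v => //.
Qed.


Lemma sq_one (s c : R) : s ^+ 2 + c ^+ 2 = 1 -> 1 <= `|s| -> c = 0.
Proof.
move=> h hs.
have : `|s| ^+ 2 <= 1 by rewrite -h real_normK ?num_real // lerDl sqr_ge0.
move=> h2; have : 1 <= `|s| ^+ 2 by rewrite -(expr1n _ 2%N) lerXn2r // ?nnegrE.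
move=> h3; have h4 : c ^+ 2 = 0.
  have := sqr_ge0 c; rewrite real_normK ?num_real // in h2 h3; lra.
by move/eqP: h4; rewrite sqrf_eq0 => /eqP.
Qed.

Lemma degen a b : 1 <= `|sin (pi * (a + 2 * b))| -> 1 <= `|sin (pi * (b + 2 * a))| ->
  gg a b <= 0 \/ gg a b = 1.
Proof.
move=> hP hQ.
set A := pi * a; set B := pi * b.
have eP : pi * (a + 2 * b) = A + (B + B) by rewrite /A /B; ring.
have eQ : pi * (b + 2 * a) = B + (A + A) by rewrite /A /B; ring.
rewrite eP in hP; rewrite eQ in hQ.
have cP0 : cos (A + (B + B)) = 0.
  by apply: (@sq_one (sin (A + (B + B)))) => //; rewrite addrC cos2Dsin2.
have cQ0 : cos (B + (A + A)) = 0.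
  by apply: (@sq_one (sin (B + (A + A)))) => //; rewrite addrC cos2Dsin2.
have sP2 : sin (A + (B + B)) ^+ 2 = 1 by rewrite sin2cos2 cP0; lra.
have sQ2 : sin (B + (A + A)) ^+ 2 = 1 by rewrite sin2cos2 cQ0; lra.
have eD : B - A = (A + (B + B)) - (B + (A + A)) by ring.
have sD0 : sin (B - A) = 0 by rewrite eD sin_sub cP0 cQ0; ring.
set e := sin (A + (B + B)) * sin (B + (A + A)).
have cDe : cos (B - A) = e by rewrite eD cos_sub cP0 cQ0 /e; ring.
have e2 : e ^+ 2 = 1 by rewrite /e exprMn sP2 sQ2 mulr1.
have eB : B = A + (B - A) by ring.
have sB : sin B = sin A * e.
  by rewrite {1}eB sinD sD0 cDe mulr0 addr0.
have cB : cos B = cos A * e by rewrite {1}eB cosD sD0 cDe mulr0 subr0.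
have hA := cos2Dsin2 A.
have sP : sin (A + (B + B)) = sin A * (cos A ^+ 2 - sin A ^+ 2) + 2 * sin A * cos A ^+ 2.
  rewrite sinD sinD cosD sB cB.
  transitivity (e ^+ 2 * (sin A * (cos A ^+ 2 - sin A ^+ 2) + 2 * sin A * cos A ^+ 2)); first ring.
  by rewrite e2 mul1r.
have cP : cos (A + (B + B)) = cos A * (cos A ^+ 2 - sin A ^+ 2) - 2 * sin A ^+ 2 * cos A.
  rewrite cosD sinD cosD sB cB.
  transitivity (e ^+ 2 * (cos A * (cos A ^+ 2 - sin A ^+ 2) - 2 * sin A ^+ 2 * cos A)); first ring.
  by rewrite e2 mul1r.
rewrite gg_sin -/A eP sP.
rewrite cP0 in cP.
have : cos A = 0 \/ sin A ^+ 2 = 1/4.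
  have : cos A * (1 - 4 * sin A ^+ 2) = 0.
    transitivity (cos A * ((cos A ^+ 2 + sin A ^+ 2) - 4 * sin A ^+ 2)); first by rewrite hA.
    rewrite cP; ring.
  move/eqP; rewrite mulf_eq0 => /orP[/eqP -> |/eqP h]; [by left|right; lra].
case=> [c0|s2].
- left; rewrite c0; rewrite c0 in hA; rewrite !expr2 in hA *; nra.
- right; have c2 : cos A ^+ 2 = 3/4 by lra.
  rewrite c2; rewrite !expr2 in s2 *; nra.
Qed.

Lemma p11 : continuous (fun z : pt R => z.1.1).
Proof.
move=> z.
apply: (continuous_comp (f := fst)); first exact: cvg_fst.
exact: cvg_fst.
Qed.
Lemma p12 : continuous (fun z : pt R => z.1.2).
Proof.
move=> z.
apply: (continuous_comp (f := fst)); first exact: cvg_fst.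
exact: cvg_snd.
Qed.
Lemma p2 : continuous (fun z : pt R => z.2).
Proof. move=> z; exact: cvg_snd. Qed.

Lemma boxP (z0 : pt R) (P : pt R -> Prop) : (\forall z \near z0, P z) ->
  exists2 d : R, 0 < d & forall z, `|z.1.1 - z0.1.1| < d -> `|z.1.2 - z0.1.2| < d -> `|z.2 - z0.2| < d -> P z.
Proof.
move=> /nbhs_ballP [d d0 H]; exists d => // z h1 h2 h3; apply: H.
rewrite /ball /= /prod_ball /=.
split; [split|]; rewrite /ball /= distrC //.
Qed.
Lemma cos_nat (x : R) (n : nat) : cos (x + 2 * pi * n%:R) = cos x.
Proof.
have := periodicn (@cosD2pi R) n x.
rewrite -[pi *+ 2 *+ n]mulr_natl -[pi *+ 2]mulr_natl => <-; congr cos; ring.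
Qed.
Lemma cos_int (x : R) (m : int) : cos (x - 2 * pi * m%:~R) = cos x.
Proof.
case: m => n.
- rewrite pmulrn.
  transitivity (cos ((x - 2 * pi * n%:R) + 2 * pi * n%:R)); first by rewrite cos_nat.
  by rewrite subrK.
- by rewrite NegzE intrN pmulrn mulrN opprK cos_nat.
Qed.

Section Meas.
Local Open Scope ereal_scope.

Lemma leb_mono (A B : set R) : A `<=` B -> (@lebesgue_measure R A <= lebesgue_measure B).
Proof.
move=> AB. rewrite /lebesgue_measure /lebesgue_stieltjes_measure /measure_extension.
exact: le_outer_measure.
Qed.

Lemma leb3_mono (A B : set (pt R)) : A `<=` B -> leb3 A <= leb3 B.
Proof.
move=> AB.
have E : forall C, leb3 C = \int[(@lebesgue_measure R \x @lebesgue_measure R)%E]_x (@lebesgue_measure R (xsection C x)) by [].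
rewrite !E !ge0_integralE //=.
apply: ereal_sup_le => _ [h /= hle <-]; exists h => //= x.
apply: (le_trans (hle x)).
rewrite /patch /=. case: ifP => // _.
apply: leb_mono => y; rewrite /xsection /= !inE; exact: AB.
Qed.
End Meas.
Lemma leb3_box (a b c e : R) : 0 < e ->
  (0 < leb3 ((([set` `[a, a + e[%R] : set R) `*` [set` `[b, b + e[%R]) `*` [set` `[c, c + e[%R]))%E.
Proof.
move=> e0.
rewrite /leb3.
rewrite (@product_measure1E _ _ _ _ R (@lebesgue_measure R \x @lebesgue_measure R)%E (@lebesgue_measure R)); last 2 first.
  exact: measurableX.
  done.
set M := (X in (X * _)%E).
have -> : (M = lebesgue_measure (`[a, (a + e)%R[%classic : set R) * lebesgue_measure (`[b, (b + e)%R[%classic : set R))%E.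
  exact: (@product_measure1E _ _ _ _ R (@lebesgue_measure R) (@lebesgue_measure R)).
have L : forall x : R, (lebesgue_measure (`[x, (x + e)%R[%classic : set R) = e%:E)%E.
  move=> x; rewrite lebesgue_measure_itv /= lte_fin ltrDl e0 -EFinD.
  by rewrite addrAC subrr add0r.
rewrite !L.
set N := (X in (_ * X)%E).
have -> : N = e%:E by exact: L.
by rewrite -!EFinM lte_fin !mulr_gt0.
Qed.
End T.

Section H.
Variable R : realType.

Definition inbox (z0 : pt R) (d : R) (z : pt R) :=
  `|z.1.1 - z0.1.1| < d /\ `|z.1.2 - z0.1.2| < d /\ `|z.2 - z0.2| < d.

Lemma gg_pos (w0 : R) (h2 : 2 < w0) (v y : pt R) : GG v y = w0 ->
  0 < gg v.1.1 y.1.1 /\ 0 < gg v.1.2 y.1.2 /\ 0 < gg v.2 y.2.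
Proof.
rewrite /GG => H.
have := gg_le1 v.1.1 y.1.1; have := gg_le1 v.1.2 y.1.2; have := gg_le1 v.2 y.2.
move=> *; split; [lra|split; lra].
Qed.

Lemma pi_neq0 : (pi : R) != 0.
Proof. by apply/negP => /eqP h; have := @pi_gt0 R; rewrite h ltxx. Qed.

Lemma aux_pi (p a c : R) : p != 0 -> p * (c + 2 * ((a / p - c) / 2)) = a.
Proof. by move=> ?; field. Qed.

Lemma hub_valid (w0 : R) (v y : pt R) (phi : R) :
  GG v y = w0 -> sin (pi * v.2) != 0 ->
  let U := sin (pi * (v.2 + 2 * y.2)) - sin (pi * v.1.2) / sin (pi * v.2) *
            (sin (pi * (v.1.2 + 2 * phi)) - sin (pi * (v.1.2 + 2 * y.1.2))) in
  -1 <= U <= 1 ->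
  GG v ((y.1.1, phi), (asin U / pi - v.2) / 2) = w0.
Proof.
move=> Hvy s3n0 U HU.
move: Hvy; rewrite /GG /= !(gg_sin v.1.2) !(gg_sin v.2).
rewrite aux_pi; last exact: pi_neq0.
rewrite asinK; last by rewrite in_itv.
move=> <-; rewrite /U; field; exact: s3n0.
Qed.


Lemma cos_sin_prod (a b : R) : 2 * cos a * sin b = sin (a + b) - sin (a - b).
Proof. rewrite sinD sin_sub; ring. Qed.

Lemma key_gen (phi w d : R) :
  cc (phi + (w + d)) - cc (w + d) - cc (phi + w) + cc w =
  8 * sin (pi * d) * cos (pi * (phi + 2 * w + d)) * sin (pi * phi).
Proof.
have h1 : cos (2 * pi * (phi + w)) - cos (2 * pi * (phi + (w + d))) =
    2 * sin (pi * (2 * phi + 2 * w + d)) * sin (pi * d).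
  rewrite prod_sin; congr (cos _ - cos _); ring.
have h2 : cos (2 * pi * w) - cos (2 * pi * (w + d)) =
    2 * sin (pi * (2 * w + d)) * sin (pi * d).
  rewrite prod_sin; congr (cos _ - cos _); ring.
have h3 : sin (pi * (2 * phi + 2 * w + d)) - sin (pi * (2 * w + d)) =
    2 * cos (pi * (phi + 2 * w + d)) * sin (pi * phi).
  rewrite cos_sin_prod; congr (sin _ - sin _); ring.
rewrite /cc.
transitivity (2 * (cos (2 * pi * (phi + w)) - cos (2 * pi * (phi + (w + d)))) -
   2 * (cos (2 * pi * w) - cos (2 * pi * (w + d)))); first ring.
rewrite h1 h2.
transitivity (4 * sin (pi * d) * (sin (pi * (2 * phi + 2 * w + d)) - sin (pi * (2 * w + d)))); first ring.
rewrite h3; ring.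
Qed.

Lemma sin_pihalfB (x : R) : sin (pi / 2 - x) = cos x.
Proof. by rewrite addrC sinDpihalf cosN. Qed.

Lemma key (phi w m : R) :
  cc (phi + (w + (1/2 - m - 2 * w))) - cc (w + (1/2 - m - 2 * w)) - cc (phi + w) + cc w =
  - 8 * cos (pi * (m + 2 * w)) * sin (pi * (phi - m)) * sin (pi * phi).
Proof.
rewrite key_gen.
have -> : pi * (1 / 2 - m - 2 * w) = pi / 2 - pi * (m + 2 * w) by ring.
have -> : pi * (phi + 2 * w + (1 / 2 - m - 2 * w)) = pi * (phi - m) + pi / 2 by ring.
rewrite sin_pihalfB cosDpihalf; ring.
Qed.


Lemma sin_pi_nz (t : R) : 0 < `|t| < 1 -> sin (pi * t) != 0.
Proof.
move=> /andP[t0 t1]; have pi0 := @pi_gt0 R.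
have [tge|tlt] := leP 0 t.
- rewrite ger0_norm // in t0 t1.
  apply/lt0r_neq0/sin_gt0_pi; apply/andP; split; first exact: mulr_gt0.
  by rewrite -[X in _ < X]mulr1 ltr_pM2l.
- rewrite ltr0_norm // in t0 t1.
  rewrite -[t]opprK mulrN sinN oppr_eq0.
  apply/lt0r_neq0/sin_gt0_pi; apply/andP; split; first exact: mulr_gt0.
  by rewrite -[X in _ < X]mulr1 ltr_pM2l.
Qed.

Lemma pair_sin (a b : R) : 0 < `|a - b| < 1 -> sin (pi * a) = 0 -> sin (pi * b) = 0 -> False.
Proof.
move=> /sin_pi_nz h ha hb; move: h.
by rewrite mulrBr sin_sub ha hb ?mul0r ?mulr0 ?subrr ?subr0 eqxx.
Qed.

Lemma pair_cos (a b w : R) : 0 < `|a - b| < 1 -> cos (pi * (a + 2 * w)) = 0 ->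
  cos (pi * (b + 2 * w)) = 0 -> False.
Proof.
move=> /sin_pi_nz h ha hb; move: h.
have -> : pi * (a - b) = pi * (a + 2 * w) - pi * (b + 2 * w) by ring.
by rewrite sin_sub ha hb ?mulr0 ?mul0r ?subrr ?subr0 eqxx.
Qed.

Lemma choose_m (c w e : R) : 0 < e -> e <= 1 ->
  exists m, `|m - c| < e / 2 /\ sin (pi * m) != 0 /\ cos (pi * (m + 2 * w)) != 0.
Proof.
move=> e0 e1.
set c1 := c + e / 4; set c2 := c - e / 4.
have d01 : 0 < `|c - c1| < 1.
  rewrite /c1 (_ : c - (c + e / 4) = - (e / 4)); last by lra.
  rewrite normrN gtr0_norm; [apply/andP; split|]; lra.
have d02 : 0 < `|c - c2| < 1.
  rewrite /c2 (_ : c - (c - e / 4) = e / 4); last by lra.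
  rewrite gtr0_norm; [apply/andP; split|]; lra.
have d12 : 0 < `|c1 - c2| < 1.
  rewrite /c1 /c2 (_ : c + e / 4 - (c - e / 4) = e / 2); last by lra.
  rewrite gtr0_norm; [apply/andP; split|]; lra.
have n1 : `|c1 - c| < e / 2.
  rewrite /c1 (_ : c + e / 4 - c = e / 4); last by lra.
  rewrite gtr0_norm; lra.
have n2 : `|c2 - c| < e / 2.
  rewrite /c2 (_ : c - e / 4 - c = - (e / 4)); last by lra.
  rewrite normrN gtr0_norm; lra.
have n0 : `|c - c| < e / 2 by rewrite subrr normr0; lra.
have [A0|A0] := eqVneq (sin (pi * c)) 0.
- have A1 : sin (pi * c1) != 0 by apply/eqP => h; exact: (pair_sin d01 A0 h).
  have A2 : sin (pi * c2) != 0 by apply/eqP => h; exact: (pair_sin d02 A0 h).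
  have [B1|B1] := eqVneq (cos (pi * (c1 + 2 * w))) 0.
  + have B2 : cos (pi * (c2 + 2 * w)) != 0 by apply/eqP => h; exact: (pair_cos d12 B1 h).
    by exists c2.
  + by exists c1.
- have [B0|B0] := eqVneq (cos (pi * (c + 2 * w))) 0.
  + have B1 : cos (pi * (c1 + 2 * w)) != 0 by apply/eqP => h; exact: (pair_cos d01 B0 h).
    have B2 : cos (pi * (c2 + 2 * w)) != 0 by apply/eqP => h; exact: (pair_cos d02 B0 h).
    have [A1|A1] := eqVneq (sin (pi * c1)) 0.
    * have A2 : sin (pi * c2) != 0 by apply/eqP => h; exact: (pair_sin d12 A1 h).
      by exists c2.
    * by exists c1.
  + by exists c.
Qed.


Lemma cont_sin_lin (k c : R) : continuous (fun t : R => sin (k * (c + t))).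
Proof.
move=> x.
apply: (continuous_comp (f := fun t : R => k * (c + t))); last exact: continuous_sin.
apply: continuousM; first exact: cst_continuous.
apply: continuousD; first exact: cst_continuous.
exact: cvg_id.
Qed.

Lemma choose_r (q e : R) : 0 < q -> 0 < e ->
  exists r, 0 < r /\ r <= e / 2 /\ r < 1 /\ sin (pi * r) ^+ 2 < q.
Proof.
move=> q0 e0.
pose f := fun t : R => sin (pi * (0 + t)) * sin (pi * (0 + t)).
have fc : {for 0, continuous f}.
  by apply: continuousM; apply: cont_sin_lin.
have f0 : f 0 = 0 by rewrite /f addr0 mulr0 sin0 mulr0.
have : \forall t \near (0 : R), f t < q.
  have fc' : f @ (0 : R) --> (0 : R) by rewrite -[X in _ --> X]f0; exact: fc.
  exact: (cvgr_lt 0 fc' q q0).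
move=> /nbhs_ballP [rho rho0 H].
have rho0' : 0 < rho by exact: rho0.
pose r := Num.min (rho / 2) (Num.min (e / 2) (1 / 2)).
have r0 : 0 < r by rewrite /r !lt_min; apply/and3P; split; lra.
have r1 : r <= rho / 2 by rewrite /r ge_min lexx.
have r2 : r <= e / 2 by rewrite /r !ge_min lexx orbT.
have r3 : r <= 1 / 2 by rewrite /r !ge_min lexx !orbT.
exists r; split => //; split => //; split; first lra.
have := H r; rewrite /ball /= sub0r normrN gtr0_norm // => /(_ ltac:(lra)).
by rewrite /f add0r expr2.
Qed.


Lemma cc_cont : continuous (fun t : R => cc t).
Proof.
move=> x; rewrite /cc.
apply: (continuous_comp (f := fun t : R => cos (2 * pi * t)) (g := fun u : R => 2 * (1 - u))).
  apply: (continuous_comp (f := fun t : R => 2 * pi * t)); last exact: continuous_cos.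
  apply: continuousM; first exact: cst_continuous.
  exact: cvg_id.
apply: continuousM; first exact: cst_continuous.
apply: continuousB; first exact: cst_continuous.
exact: cvg_id.
Qed.

Lemma gg_contl {T : topologicalType} (g : T -> R) (b : R) x :
  {for x, continuous g} -> {for x, continuous (fun t => gg (g t) b)}.
Proof.
move=> gc; rewrite /gg.
apply: continuousB; last first.
  exact: cst_continuous.
apply: continuousB; last first.
  by apply: (continuous_comp (f := g)) => //; exact: cc_cont.
apply: (continuous_comp (f := fun t => g t + b)); last exact: cc_cont.
by apply: continuousD => //; exact: cst_continuous.
Qed.

Lemma gg_contr {T : topologicalType} (g : T -> R) (a : R) x :
  {for x, continuous g} -> {for x, continuous (fun t => gg a (g t))}.
Proof.
move=> gc; rewrite /gg.
apply: continuousB; last first.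
  by apply: (continuous_comp (f := g)) => //; exact: cc_cont.
apply: continuousB; last first.
  exact: cst_continuous.
apply: (continuous_comp (f := fun t => a + g t)); last exact: cc_cont.
by apply: continuousD => //; exact: cst_continuous.
Qed.

Lemma GG_contr (y z0 : pt R) : {for z0, continuous (fun z => GG y z)}.
Proof.
rewrite /GG; apply: continuousD; first apply: continuousD.
- by apply: gg_contr; exact: p11.
- by apply: gg_contr; exact: p12.
- by apply: gg_contr; exact: p2.
Qed.

Lemma ggC (a b : R) : gg a b = gg b a.
Proof. by rewrite /gg (addrC a b); lra. Qed.

Lemma sin_prod_diff (a b : R) : sin (a - b) * sin (a + b) = sin a ^+ 2 - sin b ^+ 2.
Proof.
have h := prod_sin (a - b) (a + b).
have e1 : a - b - (a + b) = - (b + b) by ring.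
have e2 : a - b + (a + b) = a + a by ring.
rewrite e1 e2 cosN in h.
have := sin2_cos a; have := sin2_cos b; lra.
Qed.


Lemma U_cont (A B C k c a : R) :
  continuous (fun t : R => A - B * (sin (k * (c + a * t)) - C)).
Proof.
move=> x.
apply: (continuous_comp (f := fun t : R => sin (k * (c + a * t))) (g := fun u : R => A - B * (u - C))).
  apply: (continuous_comp (f := fun t : R => k * (c + a * t))); last exact: continuous_sin.
  apply: continuousM; first exact: cst_continuous.
  apply: continuousD; first exact: cst_continuous.
  apply: continuousM; first exact: cst_continuous.
  exact: cvg_id.
apply: continuousB; first exact: cst_continuous.
apply: continuousM; first exact: cst_continuous.
apply: continuousB; last exact: cst_continuous.
exact: cvg_id.
Qed.

Lemma minmax0 (a b : R) : a * b < 0 -> Num.min a b <= 0 <= Num.max a b.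
Proof.
move=> ab; have [a0|a0] := leP a 0.
- have b0 : 0 < b by apply: contra_ltT ab => b0; rewrite -leNgt in b0 *; nra.
  by rewrite ge_min a0 /= le_max (ltW b0) orbT.
- have b0 : b < 0 by apply: contra_ltT ab => b0; rewrite -leNgt in b0 *; nra.
  by rewrite ge_min (ltW b0) orbT le_max (ltW a0).
Qed.

Lemma prodGG_cvg (y1 y2 : pt R) (w0 : R) (z0 : pt R) :
  (fun z => (GG y1 z - w0) * (GG y2 z - w0)) @ z0 --> (GG y1 z0 - w0) * (GG y2 z0 - w0).
Proof.
apply: cvgM; apply: cvgB; try exact: cvg_cst; exact: GG_contr.
Qed.

Lemma Yc_cont (U : R -> R) (c x : R) : {for x, continuous U} -> -1 < U x < 1 ->
  {for x, continuous (fun phi => (asin (U phi) / pi - c) / 2)}.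
Proof.
move=> Uc hx.
apply: (continuous_comp (f := U) (g := fun u => (asin u / pi - c) / 2)) => //.
apply: (continuous_comp (f := @asin R) (g := fun u => (u / pi - c) / 2)).
  exact: continuous_asin.
apply: continuousM; last exact: cst_continuous.
apply: continuousB; last exact: cst_continuous.
apply: continuousM; last exact: cst_continuous.
exact: cvg_id.
Qed.

Lemma Phi_cont (a : R) (g : R -> R) (z : pt R) (w0 x : R) : {for x, continuous g} ->
  {for x, continuous (fun phi => GG ((a, phi), g phi) z - w0)}.
Proof.
move=> gc; rewrite /GG /=.
apply: continuousB; last exact: cst_continuous.
apply: continuousD; first apply: continuousD.
- exact: cst_continuous.
- by apply: (gg_contl (g := fun t => t)); exact: cvg_id.
- exact: gg_contl.
Qed.

Lemma hub (w0 : R) (h2 : 2 < w0) (v y : pt R) : GG v y = w0 ->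
  `|sin (pi * (v.2 + 2 * y.2))| < 1 ->
  exists z0 : pt R, exists2 d : R, 0 < d & forall z, inbox z0 d z -> reach2 w0 v z.
Proof.
move=> Hvy Hu.
have [g1 [g2 g3]] := gg_pos h2 Hvy.
have s3n0 : sin (pi * v.2) != 0.
  apply/eqP => h; move: g3; rewrite gg_sin h mulr0 mul0r ltxx //.
pose U := fun phi => sin (pi * (v.2 + 2 * y.2)) - sin (pi * v.1.2) / sin (pi * v.2) *
            (sin (pi * (v.1.2 + 2 * phi)) - sin (pi * (v.1.2 + 2 * y.1.2))).
pose Yc := fun phi => (asin (U phi) / pi - v.2) / 2.
pose Y := fun phi => ((y.1.1, phi), Yc phi) : pt R.
have valid : forall phi, -1 <= U phi <= 1 -> GG v (Y phi) = w0.
  by move=> phi hphi; exact: (@hub_valid w0 v y phi Hvy s3n0 hphi).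
have Ucont : continuous U.
  exact: U_cont.
have U0 : U y.1.2 = sin (pi * (v.2 + 2 * y.2)) by rewrite /U subrr mulr0 subr0.
have [e e0 He] : exists2 e, 0 < e & forall phi, `|phi - y.1.2| < e -> -1 < U phi < 1.
  have Uc : U @ y.1.2 --> sin (pi * (v.2 + 2 * y.2)) by rewrite -U0; exact: Ucont.
  move: Hu; rewrite ltr_norml => /andP[hu1 hu2].
  have N1 := @cvgr_lt _ _ _ (nbhs_filter _) _ _ Uc _ hu2.
  have N2 := @cvgr_gt _ _ _ (nbhs_filter _) _ _ Uc _ hu1.
  move/nbhs_ballP: N1 => [e1 e10 H1].
  move/nbhs_ballP: N2 => [e2 e20 H2].
  have e10' : 0 < e1 by [].
  have e20' : 0 < e2 by [].
  exists (Num.min e1 e2); first by rewrite lt_min e10' e20'.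
  move=> phi; rewrite lt_min => /andP[p1 p2]; apply/andP; split.
    by apply: H2; rewrite /ball /= distrC.
  by apply: H1; rewrite /ball /= distrC.
pose e' := Num.min e 1.
have e'0 : 0 < e' by rewrite lt_min e0 ltr01.
have e'1 : e' <= 1 by rewrite ge_min lexx orbT.
have e'e : e' <= e by rewrite ge_min lexx.
have [m [hm [sm cm]]] := choose_m y.1.2 v.1.2 e'0 e'1.
have q0 : 0 < sin (pi * m) ^+ 2.
  by rewrite lt_neqAle sqr_ge0 andbT eq_sym sqrf_eq0.
have [r [r0 [re [r1 rq]]]] := choose_r q0 e'0.
have inI : forall phi, m - r <= phi <= m + r -> -1 < U phi < 1.
  move=> phi /andP[p1 p2]; apply: He.
  have : `|phi - m| <= r by rewrite ler_norml; apply/andP; split; lra.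
  move=> h; rewrite (_ : phi - y.1.2 = (phi - m) + (m - y.1.2)); last by ring.
  apply: (le_lt_trans (ler_normD _ _)); lra.
have inI' : forall phi, m - r <= phi <= m + r -> -1 <= U phi <= 1.
  by move=> phi /inI /andP[a b]; apply/andP; split; apply: ltW.
pose d := 1/2 - m - 2 * v.1.2.
pose z0 : pt R := ((v.1.1, v.1.2 + d), v.2).
pose Phi := fun phi (z : pt R) => GG (Y phi) z - w0.
have Fz0 : forall phi, -1 <= U phi <= 1 ->
    Phi phi z0 = - 8 * cos (pi * (m + 2 * v.1.2)) * sin (pi * (phi - m)) * sin (pi * phi).
  move=> phi hphi; have V := valid phi hphi.
  rewrite /Phi -key -V /GG /= (ggC y.1.1) (ggC (Yc phi)) /gg /d (addrC v.1.2 phi); lra.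
have Pneg : Phi (m - r) z0 * Phi (m + r) z0 < 0.
  set K := cos (pi * (m + 2 * v.1.2)).
  have E : Phi (m - r) z0 * Phi (m + r) z0 =
      - (64 * K ^+ 2 * sin (pi * r) ^+ 2 * (sin (pi * m - pi * r) * sin (pi * m + pi * r))).
    rewrite !Fz0; last 2 first.
      by apply: inI'; apply/andP; split; lra.
      by apply: inI'; apply/andP; split; lra.
    have e1 : pi * (m - r - m) = - (pi * r) by ring.
    have e2 : pi * (m + r - m) = pi * r by ring.
    have e3 : pi * (m - r) = pi * m - pi * r by ring.
    have e4 : pi * (m + r) = pi * m + pi * r by ring.
    rewrite e1 e2 e3 e4 sinN -/K; ring.
  rewrite E sin_prod_diff oppr_lt0.
  have K0 : 0 < K ^+ 2 by rewrite lt_neqAle sqr_ge0 andbT eq_sym sqrf_eq0.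
  have sr0 : 0 < sin (pi * r).
    apply: sin_gt0_pi; have := @pi_gt0 R => p0; apply/andP; split.
      exact: mulr_gt0.
    by rewrite -[X in _ < X]mulr1 ltr_pM2l.
  have sr2 : 0 < sin (pi * r) ^+ 2 by apply: exprn_gt0.
  apply: mulr_gt0; last by lra.
  by apply: mulr_gt0 => //; apply: mulr_gt0.
have [dl dl0 Hdl] : exists2 dl : R, 0 < dl & forall z, inbox z0 dl z ->
    Phi (m - r) z * Phi (m + r) z < 0.
  have C := @prodGG_cvg (Y (m - r)) (Y (m + r)) w0 z0.
  have N := @cvgr_lt _ _ _ (nbhs_filter _) _ _ C 0 Pneg.
  have [dl dl0 H] := boxP N.
  by exists dl => // z [b1 [b2 b3]]; exact: H z b1 b2 b3.
exists z0, dl => // z hz.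
have Pz := Hdl z hz.
have mr : m - r <= m + r by lra.
have fcont : {within `[m - r, m + r], continuous (fun phi => Phi phi z)}.
  apply: continuous_in_subspaceT => phi; rewrite inE /= in_itv /= => hphi.
  apply: Phi_cont; apply: Yc_cont; [exact: Ucont | exact: inI].
have mm : Num.min (Phi (m - r) z) (Phi (m + r) z) <= 0 <= Num.max (Phi (m - r) z) (Phi (m + r) z).
  exact: minmax0.
have [c hc fc] := IVT mr fcont mm.
exists (Y c); split.
  by apply: valid; apply: inI'; move: hc; rewrite in_itv.
by move: fc; rewrite /Phi => /eqP; rewrite subr_eq0 => /eqP.
Qed.

End H.

Section F.
Variable R : realType.

Definition sw13 (p : pt R) : pt R := ((p.2, p.1.2), p.1.1).
Definition sw23 (p : pt R) : pt R := ((p.1.1, p.2), p.1.2).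

Lemma GG_sw13 (a b : pt R) : GG (sw13 a) (sw13 b) = GG a b.
Proof. by rewrite /GG /=; lra. Qed.
Lemma GG_sw23 (a b : pt R) : GG (sw23 a) (sw23 b) = GG a b.
Proof. by rewrite /GG /=; lra. Qed.
Lemma sw13K (p : pt R) : sw13 (sw13 p) = p.
Proof. by case: p => [[? ?] ?]. Qed.
Lemma sw23K (p : pt R) : sw23 (sw23 p) = p.
Proof. by case: p => [[? ?] ?]. Qed.

Definition boxprop (w0 : R) (v : pt R) :=
  exists z0 : pt R, exists2 d : R, 0 < d & forall z, inbox z0 d z -> reach2 w0 v z.

Lemma hub_any (w0 : R) (h2 : 2 < w0) (v y : pt R) : GG v y = w0 ->
  `|sin (pi * (v.1.1 + 2 * y.1.1))| < 1 \/ `|sin (pi * (v.1.2 + 2 * y.1.2))| < 1 \/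
  `|sin (pi * (v.2 + 2 * y.2))| < 1 -> boxprop w0 v.
Proof.
move=> Hvy [h|[h|h]].
- have H' : GG (sw13 v) (sw13 y) = w0 by rewrite GG_sw13.
  have [z0 [d d0 Hd]] := hub h2 H' h.
  exists (sw13 z0); exists d => // z hz.
  have [y' [r1 r2]] : reach2 w0 (sw13 v) (sw13 z).
    by apply: Hd; move: hz; rewrite /inbox /=; tauto.
  exists (sw13 y'); split.
    by rewrite -GG_sw13 sw13K.
  by rewrite -GG_sw13 sw13K.
- have H' : GG (sw23 v) (sw23 y) = w0 by rewrite GG_sw23.
  have [z0 [d d0 Hd]] := hub h2 H' h.
  exists (sw23 z0); exists d => // z hz.
  have [y' [r1 r2]] : reach2 w0 (sw23 v) (sw23 z).
    by apply: Hd; move: hz; rewrite /inbox /=; tauto.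
  exists (sw23 y'); split.
    by rewrite -GG_sw23 sw23K.
  by rewrite -GG_sw23 sw23K.
- by rewrite /boxprop; exact: (hub h2 Hvy h).
Qed.

Lemma nondeg (w0 : R) (h2 : 2 < w0) (h3 : w0 < 3) (a b : pt R) : GG a b = w0 ->
  (`|sin (pi * (a.1.1 + 2 * b.1.1))| < 1 \/ `|sin (pi * (a.1.2 + 2 * b.1.2))| < 1 \/
   `|sin (pi * (a.2 + 2 * b.2))| < 1) \/
  (`|sin (pi * (b.1.1 + 2 * a.1.1))| < 1 \/ `|sin (pi * (b.1.2 + 2 * a.1.2))| < 1 \/
   `|sin (pi * (b.2 + 2 * a.2))| < 1).
Proof.
move=> Hab.
have [g1 [g2 g3]] := gg_pos h2 Hab.
have F : forall p q : R, 0 < gg p q -> 1 <= `|sin (pi * (p + 2 * q))| ->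
    1 <= `|sin (pi * (q + 2 * p))| -> gg p q = 1.
  move=> p q gp h1 h1'; case: (degen h1 h1') => // h; lra.
have [A1|A1] := ltP `|sin (pi * (a.1.1 + 2 * b.1.1))| 1; first by left; left.
have [A2|A2] := ltP `|sin (pi * (a.1.2 + 2 * b.1.2))| 1; first by left; right; left.
have [A3|A3] := ltP `|sin (pi * (a.2 + 2 * b.2))| 1; first by left; right; right.
have [B1|B1] := ltP `|sin (pi * (b.1.1 + 2 * a.1.1))| 1; first by right; left.
have [B2|B2] := ltP `|sin (pi * (b.1.2 + 2 * a.1.2))| 1; first by right; right; left.
have [B3|B3] := ltP `|sin (pi * (b.2 + 2 * a.2))| 1; first by right; right; right.
exfalso.
have e1 := F _ _ g1 A1 B1; have e2 := F _ _ g2 A2 B2; have e3 := F _ _ g3 A3 B3.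
move: Hab; rewrite /GG e1 e2 e3 => h; lra.
Qed.


Lemma cc_int (t : R) (k : int) : cc (t + k%:~R) = cc t.
Proof.
rewrite /cc (_ : 2 * pi * (t + k%:~R) = 2 * pi * t - 2 * pi * ((- k)%:~R)).
  by rewrite cos_int.
by rewrite intrN; ring.
Qed.

Lemma GG_shift (y z : pt R) (n1 n2 n3 : int) :
  GG y ((z.1.1 + n1%:~R, z.1.2 + n2%:~R), z.2 + n3%:~R) = GG y z.
Proof. by rewrite /GG /gg /= !addrA !cc_int. Qed.

Lemma fl (t : R) : 0 <= t - (Num.floor t)%:~R < 1.
Proof.
have h1 := real_floor_le (num_real t); have h2 := real_floorD1_gt (num_real t).
rewrite intrD in h2; apply/andP; split; lra.
Qed.

Lemma final (w0 : R) (x v : pt R) : (v = x \/ Defs.connected1 w0 x v) -> boxprop w0 v ->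
  (0 < @leb3 R (Sall w0 x `&` @cube R))%E.
Proof.
move=> hv [z0 [d d0 Hd]].
set n1 := Num.floor z0.1.1; set n2 := Num.floor z0.1.2; set n3 := Num.floor z0.2.
set a1 := z0.1.1 - n1%:~R; set a2 := z0.1.2 - n2%:~R; set a3 := z0.2 - n3%:~R.
have /andP[a10 a11] : 0 <= a1 < 1 by exact: fl.
have /andP[a20 a21] : 0 <= a2 < 1 by exact: fl.
have /andP[a30 a31] : 0 <= a3 < 1 by exact: fl.
pose e := Num.min d (Num.min (1 - a1) (Num.min (1 - a2) (1 - a3))).
have e0 : 0 < e by rewrite /e !lt_min d0 !subr_gt0 a11 a21 a31.
have ed : e <= d by rewrite /e ge_min lexx.
have ea1 : e <= 1 - a1 by rewrite /e !ge_min lexx !orbT.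
have ea2 : e <= 1 - a2 by rewrite /e !ge_min lexx !orbT.
have ea3 : e <= 1 - a3 by rewrite /e !ge_min lexx !orbT.
apply: (lt_le_trans (leb3_box a1 a2 a3 e0)).
apply: leb3_mono => z [[hz1 hz2] hz3].
move: hz1 hz2 hz3; rewrite /= !in_itv /= => /andP[z1a z1b] /andP[z2a z2b] /andP[z3a z3b].
split.
- apply: (reach_Sall hv).
  have := Hd ((z.1.1 + n1%:~R, z.1.2 + n2%:~R), z.2 + n3%:~R).
  case.
    rewrite /inbox /=.
    rewrite (_ : z.1.1 + n1%:~R - z0.1.1 = z.1.1 - a1); last by rewrite /a1; ring.
    rewrite (_ : z.1.2 + n2%:~R - z0.1.2 = z.1.2 - a2); last by rewrite /a2; ring.
    rewrite (_ : z.2 + n3%:~R - z0.2 = z.2 - a3); last by rewrite /a3; ring.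
    rewrite !ger0_norm ?subr_ge0 //; split; [lra|split; lra].
  move=> y' [r1 r2]; exists y'; split => //.
  by rewrite GG_shift in r2.
- rewrite /cube /=; split; [|split]; apply/andP; split; lra.
Qed.

End F.

Unset Implicit Arguments.

Theorem mainTheorem6 (R : realType) (w0 : R) (h2 : 2 < w0) (h3 : w0 < 3)
  (x : pt R) (hx : ~ no_collision w0 x) :
  (0 < @leb3 R (Sall w0 x `&` @cube R))%E.
Proof.
have [y hy] : exists y, Defs.connected1 w0 x y.
  case: (pselect (exists y, Defs.connected1 w0 x y)) => // H; exfalso.
  by apply: hx => y hy; apply: H; exists y.
have [a [b [Hab [ha hb]]]] := extract hy.
case: (nondeg h2 h3 Hab) => [ha'|hb'].
- apply: (final ha); exact: (hub_any h2 Hab ha').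
- apply: (final hb); apply: (hub_any h2 _ hb'); by rewrite GGC.
Qed.
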